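(* Let $\mathcal{X}$ be a finite nonempty set of types and $\Phi=(\Phi_{xy})_{x,y\in\mathcal{X}}$ a real matrix with $\Phi_{xy}=\Phi_{yx}$. Let $(n^k)_{k\ge1}$ be a sequence of vectors of nonnegative integers with $N^k=\sum_x n^k_x\to\infty$ and $n^k_x/N^k\to f_x$ for each $x$. Then there exist integer vectors $m^k$ with $0\le m^k_x\le n^k_x$ and stable outcomes $(\mu^k,u^k)$ of the roommate problem with population $m^k$ and surplus $\Phi$ such that: (i) $\bigl(N^k-\sum_x m^k_x\bigr)/N^k\to0$ (the removed subpopulation is asymptotically negligible), and (ii) the average cost per individual of compensating the removed individuals with the payoff of their type tends to zero: $\frac{1}{N^k}\sum_x (n^k_x-m^k_x)u^k_x\to0$.
   Context: Roommate matching with transferable utility for population $m=(m_x)$: $m_x$ individuals of type $x$; a pair of types $\{x,y\}$ (possibly $x=y$) generates surplus $\Phi_{xy}$; singles get $0$. Feasible roommate matchings $\mathcal{P}(m)=\{\mu\in\mathbb{N}^{\mathcal{X}\times\mathcal{X}}:\ \mu_{xy}=\mu_{yx},\ 2\mu_{xx}+\sum_{y\ne x}\mu_{xy}\le m_x\ \forall x\}$; total surplus $S_R(\mu;\Phi)=\sum_x\mu_{xx}\Phi_{xx}+\sum_{x\ne y}\mu_{xy}\Phi_{xy}/2$. An outcome is $(\mu,u)$ with $\mu\in\mathcal{P}(m)$, $u\in\mathbb{R}^{\mathcal{X}}$, $\sum_x m_xu_x=S_R(\mu;\Phi)$; it is stable if $u_x\ge0$ and $u_x+u_y\ge\Phi_{xy}$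 for all $x,y\in\mathcal{X}$. *)

(* Defs.v *)
From HB Require Import structures.
From mathcomp Require Import all_boot all_order all_algebra.
From mathcomp Require Import all_classical all_reals.
From mathcomp Require Import all_analysis.
Import numFieldNormedType.Exports.
Set Implicit Arguments. Unset Strict Implicit. Unset Printing Implicit Defensive.
Import Order.TTheory GRing.Theory Num.Theory.
Local Open Scope ring_scope.

Section Roommate.
Variables (R : realType) (X : finType).

Definition feasible (m : X -> nat) (mu : X -> X -> nat) : Prop :=
  (forall x y, mu x y = mu y x) /\
  (forall x, (2 * mu x x + \sum_(y | y != x) mu x y <= m x)%N).

Definition surplusR (Phi : X -> X -> R) (mu : X -> X -> nat) : R :=
  \sum_x (mu x x)%:R * Phi x x
  + \sum_x \sum_(y | y != x) (mu x y)%:R * Phi x y / 2.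

Definition outcome (m : X -> nat) (Phi : X -> X -> R)
  (mu : X -> X -> nat) (u : X -> R) : Prop :=
  feasible m mu /\ \sum_x (m x)%:R * u x = surplusR Phi mu.

Definition stable_outcome (m : X -> nat) (Phi : X -> X -> R)
  (mu : X -> X -> nat) (u : X -> R) : Prop :=
  outcome m Phi mu u /\ (forall x, 0 <= u x) /\
  (forall x y, Phi x y <= u x + u y).

End Roommate.

(* Main.v *)
Require Import Defs.
From HB Require Import structures.
From mathcomp Require Import all_boot all_order all_algebra.
From mathcomp Require Import all_classical all_reals.
From mathcomp Require Import all_analysis.
From mathcomp Require Import ring lra zify.
Import numFieldNormedType.Exports.
Import Order.TTheory GRing.Theory Num.Theory.
Local Open Scope ring_scope.

Section Farkas.
Variables (R : realFieldType) (X I : finType).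

Lemma mul_self_ge0 (x : R) : 0 <= x * x.
Proof. exact: sqr_ge0. Qed.

Definition dot (d v : X -> R) := \sum_x d x * v x.

Lemma dotBl (al be : R) (v w z : X -> R) :
  dot (fun x => al * v x - be * w x) z = al * dot v z - be * dot w z.
Proof.
rewrite /dot !mulr_sumr -sumrB; apply: eq_bigr => x _; ring.
Qed.

Lemma dotBr (al be : R) (v w z : X -> R) :
  dot z (fun x => al * v x - be * w x) = al * dot z v - be * dot z w.
Proof.
rewrite /dot !mulr_sumr -sumrB; apply: eq_bigr => x _; ring.
Qed.

Definition in_cone (a : I -> X -> R) (A : {set I}) (b : X -> R) :=
  exists c : I -> R, (forall i, 0 <= c i) /\ (forall i, i \notin A -> c i = 0)
    /\ (forall x, b x = \sum_i c i * a i x).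

Lemma farkas_n n : forall (A : {set I}) a b, #|A| = n ->
  in_cone a A b \/ exists d, (forall i, i \in A -> 0 <= dot d (a i)) /\ dot d b < 0.
Proof.
elim: n => [|n IH] A a b HA.
  have -> : A = finset.set0 by apply/eqP; rewrite -cards_eq0 HA.
  case: (boolP [forall x, b x == 0]) => [/forallP Hb|/forallPn [x0 Hx0]].
    left; exists (fun _ => 0); split=> // ; split=> // x.
    by rewrite (eqP (Hb x)) big1 // => i _; rewrite mul0r.
  right; exists (fun x => - b x); split=> [i|]; first by rewrite inE.
  rewrite /dot.
  have -> : \sum_x - b x * b x = - \sum_x b x * b x.
    by rewrite -sumrN; apply: eq_bigr => x _; rewrite mulNr.
  rewrite oppr_lt0 lt_neqAle sumr_ge0 ?andbT; last by move=> x _; rewrite mul_self_ge0.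
  apply/eqP => /esym H.
  have := psumr_eq0P (fun x _ => mul_self_ge0 (b x)) H (i := x0) isT.
  by move/eqP; rewrite mulf_eq0 orbb (negPf Hx0).
have /finset.set0Pn [j Hj] : A != finset.set0 by rewrite -cards_eq0 HA.
set A' := A :\ j.
have HA' : #|A'| = n.
  by move: HA; rewrite (cardsD1 j A) Hj add1n => -[].
have HAA' i : i \in A -> i != j -> i \in A'.
  by move=> HiA Hij; rewrite /A' !inE Hij.
have HjA' : j \notin A' by rewrite /A' !inE eqxx.
case: (IH A' a b HA') => [[c [c0 [cA cb]]]|[y [yA yb]]].
  left; exists c; split=> //; split=> // i Hi; apply: cA.
  by rewrite /A' !inE negb_and Hi orbT.
case: (lerP 0 (dot y (a j))) => Hyj.
  right; exists y; split=> // i Hi.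
  by case: (eqVneq i j) => [->//|Hij]; apply: yA; apply: HAA'.
set yaj := dot y (a j).
set a' := fun i x => dot y (a i) * a j x - yaj * a i x.
set b' := fun x => dot y b * a j x - yaj * b x.
have yaj0 : yaj != 0 by rewrite lt_eqF.
case: (IH A' a' b' HA') => [[c [c0 [cA cb]]]|[y' [y'A y'b]]].
  set S := \sum_i c i * dot y (a i).
  have S0 : 0 <= S.
    apply: sumr_ge0 => i _; case: (boolP (i \in A')) => Hi.
      by rewrite mulr_ge0 // yA.
    by rewrite cA // mul0r.
  set t := (dot y b - S) / yaj.
  left; exists (fun i => if i == j then t else c i); split.
    move=> i; case: eqP => // _.
    rewrite /t mulr_le0 // ?invr_le0 ?(ltW Hyj) //.
    by rewrite subr_le0 (le_trans (ltW yb)).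
  split.
    move=> i Hi; case: eqP => [Hij|/eqP Hij]; first by rewrite Hij Hj in Hi.
    by apply: cA; rewrite /A' !inE negb_and Hi orbT.
  move=> x.
  rewrite (bigD1 j) //= eqxx.
  rewrite (eq_bigr (fun i => c i * a i x)); last by move=> i /negPf ->.
  have Hcj : c j = 0 by apply: cA.
  have -> : \sum_(i | i != j) c i * a i x = \sum_i c i * a i x.
    by rewrite [in RHS](bigD1 j) //= Hcj mul0r add0r.
  apply: (mulfI yaj0).
  have := cb x; rewrite /b' /a'.
  have -> : \sum_i c i * (dot y (a i) * a j x - yaj * a i x)
     = S * a j x - yaj * \sum_i c i * a i x.
    rewrite /S mulr_suml mulr_sumr -sumrB; apply: eq_bigr => i _; ring.
  move=> Hb; rewrite /t mulrDr mulrA mulrCA mulfV // mulr1.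
  have -> : yaj * b x = dot y b * a j x - (S * a j x - yaj * \sum_i c i * a i x).
    by rewrite -Hb; ring.
  ring.
right; exists (fun x => dot y' (a j) * y x - yaj * y' x).
have key v : dot (fun x => dot y' (a j) * y x - yaj * y' x) v
    = dot y' (fun x => dot y v * a j x - yaj * v x).
  by rewrite dotBl dotBr; ring.
split.
  move=> i Hi; rewrite key.
  case: (eqVneq i j) => [->|Hij]; last by apply: y'A; apply: HAA'.
  by rewrite -/yaj dotBr /yaj mulrC subrr.
by rewrite key.
Qed.

End Farkas.

Section LP.
Variables (R : realType) (X : finType) (Phi : X -> X -> R) (f : X -> R).
Hypothesis f0 : forall x, 0 <= f x.

Lemma sum_unit (F : unit -> R) : \sum_(i : unit) F i = F tt.
Proof. by rewrite (bigD1 tt) //= big_pred0 ?addr0 // => -[]. Qed.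

Lemma sum_pair (F : X * X -> R) : \sum_q F q = \sum_x \sum_y F (x, y).
Proof. by rewrite pair_bigA; apply: eq_bigr => -[]. Qed.

Lemma sumd1 (F : X -> R) x : \sum_z F z * (x == z)%:R = F x.
Proof.
rewrite (bigD1 x) //= eqxx mulr1 big1 ?addr0 // => z.
by rewrite eq_sym => /negPf ->; rewrite mulr0.
Qed.

Lemma sumd1r (F : X -> R) x : \sum_z F z * (z == x)%:R = F x.
Proof. by rewrite -(sumd1 F x); apply: eq_bigr => z _; rewrite eq_sym. Qed.

Lemma sumd2 (F : X -> R) x y : \sum_z F z * ((x == z)%:R + (y == z)%:R) = F x + F y.
Proof. by rewrite -(sumd1 F x) -(sumd1 F y) -big_split; apply: eq_bigr => z _; rewrite mulrDr. Qed.

Lemma sumdP (F : X * X -> R) z :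
  \sum_q F q * ((q.1 == z)%:R + (q.2 == z)%:R) = \sum_y (F (z, y) + F (y, z)).
Proof.
rewrite sum_pair.
transitivity (\sum_x \sum_y (F (x, y) * (z == x)%:R + F (x, y) * (z == y)%:R)).
  by apply: eq_bigr => x _; apply: eq_bigr => y _; rewrite mulrDr ![_ == z]eq_sym.
rewrite (eq_bigr (fun x => \sum_y F (x, y) * (z == x)%:R + \sum_y F (x, y) * (z == y)%:R));
  last by move=> x _; rewrite big_split.
rewrite big_split /= [RHS]big_split /=.
congr (_ + _).
  rewrite (eq_bigr (fun x => (\sum_y F (x, y)) * (z == x)%:R)); first by rewrite sumd1.
  by move=> x _; rewrite mulr_suml.
by apply: eq_bigr => x _; rewrite (sumd1 (fun y => F (x, y))).
Qed.

Lemma sumdN (F : X * X -> R) p : \sum_q F q * - (p == q)%:R = - F p.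
Proof.
rewrite (bigD1 p) //= eqxx mulrN1 big1 ?addr0 // => q.
by rewrite eq_sym => /negPf ->; rewrite oppr0 mulr0.
Qed.

Lemma sumdN' (F : X * X -> R) p : \sum_q F q * - (q == p)%:R = - F p.
Proof. by rewrite -(sumdN F p); apply: eq_bigr => q _; rewrite eq_sym. Qed.

Lemma sum0 (I : finType) (F : I -> R) : \sum_i F i * 0 = 0.
Proof. by rewrite big1 // => i _; rewrite mulr0. Qed.

Definition C := ((X * X) + X + unit)%type.
Definition V := ((((X + (X * X)) + (X * X)) + X) + unit)%type.

Definition amat (v : V) (c : C) : R :=
  match v, c with
  | inl (inl (inl (inl z))), inl (inl p) => (p.1 == z)%:R + (p.2 == z)%:R
  | inl (inl (inl (inl z))), inr _ => - f z
  | inl (inl (inl (inr q))), inl (inl p) => - (p == q)%:R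
  | inl (inl (inr q)), inl (inr z) => (q.1 == z)%:R + (q.2 == z)%:R
  | inl (inl (inr q)), inr _ => Phi q.1 q.2
  | inl (inr x), inl (inr z) => (x == z)%:R
  | inr _, inr _ => -1
  | _, _ => 0
  end.

Definition bvec (c : C) : R :=
  match c with
  | inl (inl p) => Phi p.1 p.2
  | inl (inr x) => f x
  | inr _ => 0
  end.

Lemma lp_main : exists (u : X -> R) (lam : X -> X -> R) (sig : X -> R),
  (forall x, 0 <= u x) /\ (forall x y, Phi x y <= u x + u y) /\
  (forall x y, 0 <= lam x y) /\ (forall x, 0 <= sig x) /\
  (forall x, f x = \sum_y (lam x y + lam y x) + sig x) /\
  (forall x y, lam x y * (u x + u y - Phi x y) = 0) /\
  (forall x, sig x * u x = 0).
Proof.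
case: (@farkas_n R C V #|[set: V]| [set: V] amat bvec erefl)
   => [[c [c0 [_ cb]]]|[d [dA db]]].
  pose u z := c (inl (inl (inl (inl z)))).
  pose s p := c (inl (inl (inl (inr p)))).
  pose lam x y := c (inl (inl (inr (x, y)))).
  pose sig x := c (inl (inr x)).
  pose t := c (inr tt).
  have HP x y : Phi x y = u x + u y - s (x, y).
    have := cb (inl (inl (x, y))); rewrite !big_sumType sum_unit /=.
    rewrite sumd2 sumdN !sum0 !addr0 => ->.
    rewrite /u /s; ring.
  have HF x : f x = \sum_y (lam x y + lam y x) + sig x.
    have := cb (inl (inr x)); rewrite !big_sumType sum_unit /=.
    rewrite !sum0 sumdP sumd1r mulr0 !add0r addr0 => ->.
    done.
  have HO : 0 = - \sum_z u z * f z + \sum_x \sum_y lam x y * Phi x y - t.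
    have := cb (inr tt); rewrite !big_sumType sum_unit /=.
    rewrite !sum0 addr0 sum_pair => H; rewrite {1}H.
    have -> : \sum_i c (inl (inl (inl (inl i)))) * - f i = - \sum_z u z * f z.
      by rewrite -sumrN; apply: eq_bigr => z _; rewrite mulrN.
    by rewrite mulrN1 addr0.
  exists u, lam, sig.
  have u0 x : 0 <= u x by apply: c0.
  have l0 x y : 0 <= lam x y by apply: c0.
  have s0 x : 0 <= sig x by apply: c0.
  have g0 x y : 0 <= u x + u y - Phi x y.
    by rewrite HP; have := c0 (inl (inl (inl (inr (x, y))))); rewrite /s => ?; lra.
  set D1 := \sum_x \sum_y lam x y * (u x + u y - Phi x y).
  set D2 := \sum_x sig x * u x.
  have D10 : 0 <= D1 by apply: sumr_ge0 => x _; apply: sumr_ge0 => y _; exact: mulr_ge0 (l0 x y) (g0 x y).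
  have D20 : 0 <= D2 by apply: sumr_ge0 => x _; exact: mulr_ge0 (s0 x) (u0 x).
  have HD : D1 + D2 = - t.
    have E1a : \sum_z u z * f z = \sum_x \sum_y lam x y * u x
        + \sum_x \sum_y lam y x * u x + D2.
      rewrite /D2 -!big_split /=; apply: eq_bigr => x _.
      rewrite HF mulrDr mulr_sumr -big_split /=. congr (_ + _); last by rewrite mulrC.
      by apply: eq_bigr => y _; ring.
    have E1b : \sum_x \sum_y lam y x * u x = \sum_x \sum_y lam x y * u y.
      by rewrite exchange_big.
    have E2 : D1 = (\sum_x \sum_y lam x y * u x + \sum_x \sum_y lam x y * u y)
        - \sum_x \sum_y lam x y * Phi x y.
      rewrite /D1 -big_split -sumrB; apply: eq_bigr => x _.
      rewrite -big_split -sumrB; apply: eq_bigr => y _ /=; ring.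
    lra.
  have t0 : 0 <= t by apply: c0.
  have [D1e D2e] : D1 = 0 /\ D2 = 0 by split; lra.
  split=> //; split=> [x y|]; first by have := g0 x y; lra.
  split=> //; split=> //; split=> //.
  split.
    move=> x y.
    have Hin z : 0 <= \sum_y lam z y * (u z + u y - Phi z y).
      by apply: sumr_ge0 => w _; exact: mulr_ge0 (l0 z w) (g0 z w).
    have := psumr_eq0P (fun z _ => Hin z) D1e (i := x) isT.
    by move/(psumr_eq0P (fun y _ => mulr_ge0 (l0 x y) (g0 x y))) => /(_ y isT).
  move=> x.
  exact: (psumr_eq0P (fun x _ => mulr_ge0 (s0 x) (u0 x)) D2e (i := x) isT).
exfalso.
have dE v : dot R C d (amat v) = \sum_c d c * amat v c by [].
pose P p := - d (inl (inl p)).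
pose q x := d (inl (inr x)).
pose rho := - d (inr tt).
have HS p : 0 <= P p.
  have := dA (inl (inl (inl (inr p)))) (finset.in_setT _); rewrite dE !big_sumType sum_unit /=.
  by rewrite sumdN' !sum0 mulr0 !addr0 /P => H; lra.
have Hr : 0 <= rho.
  have := dA (inr tt) (finset.in_setT _); rewrite dE !big_sumType sum_unit /=.
  by rewrite !sum0 !add0r /rho => H; lra.
have Hq x : 0 <= q x.
  have := dA (inl (inr x)) (finset.in_setT _); rewrite dE !big_sumType sum_unit /=.
  by rewrite sumd1 !sum0 add0r mulr0 addr0 /q => H; lra.
have HL x y : rho * Phi x y <= q x + q y.
  have := dA (inl (inl (inr (x, y)))) (finset.in_setT _); rewrite dE !big_sumType sum_unit /=.
  rewrite sumd2 !sum0 add0r /rho /q => H; lra.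
have HU z : \sum_y (P (z, y) + P (y, z)) <= rho * f z.
  have := dA (inl (inl (inl (inl z)))) (finset.in_setT _); rewrite dE !big_sumType sum_unit /=.
  rewrite sumdP !sum0 addr0.
  have -> : \sum_y (d (inl (inl (z, y))) + d (inl (inl (y, z)))) = - \sum_y (P (z, y) + P (y, z)).
    by rewrite -sumrN; apply: eq_bigr => y _; rewrite /P; ring.
  rewrite /rho => H; lra.
set A := \sum_x \sum_y P (x, y) * Phi x y.
set B := \sum_x q x * f x.
have HAB : B < A.
  move: db; rewrite /dot !big_sumType sum_unit /= mulr0 addr0 sum_pair.
  have -> : \sum_x \sum_y d (inl (inl (x, y))) * Phi (x, y).1 (x, y).2 = - A.
    rewrite -sumrN; apply: eq_bigr => x _; rewrite -sumrN; apply: eq_bigr => y _.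
    by rewrite /P /= mulNr opprK.
  rewrite /B /q => H; lra.
have E : \sum_x \sum_y P (x, y) * (q x + q y) = \sum_x q x * \sum_y (P (x, y) + P (y, x)).
  transitivity (\sum_x \sum_y P (x, y) * q x + \sum_x \sum_y P (x, y) * q y).
    rewrite -big_split; apply: eq_bigr => x _; rewrite -big_split; apply: eq_bigr => y _ /=; ring.
  rewrite [X in _ + X = _]exchange_big /= -big_split; apply: eq_bigr => x _ /=.
  rewrite -big_split mulr_sumr; apply: eq_bigr => y _ /=; ring.
have chain : rho * A <= rho * B.
  apply: (@le_trans _ _ (\sum_x \sum_y P (x, y) * (q x + q y))).
    rewrite /A mulr_sumr; apply: ler_sum => x _; rewrite mulr_sumr; apply: ler_sum => y _.
    by rewrite mulrCA ler_wpM2l.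
  rewrite E /B mulr_sumr; apply: ler_sum => x _.
  by rewrite mulrCA ler_wpM2l.
case: (ltrP 0 rho) => Hr0.
  by move: chain; rewrite ler_pM2l // => H; lra.
have rho0 : rho = 0 by apply/eqP; rewrite eq_le Hr0 Hr.
have P0 x y : P (x, y) = 0.
  apply/eqP; rewrite eq_le HS andbT.
  have := HU x; rewrite rho0 mul0r => Hx; apply: le_trans Hx.
  apply: (@le_trans _ _ (P (x, y) + P (y, x))); first by rewrite lerDl.
  by rewrite (bigD1 y) //= lerDl sumr_ge0 // => w _; rewrite addr_ge0.
have A0 : A = 0 by rewrite /A big1 // => x _; rewrite big1 // => y _; rewrite P0 mul0r.
have B0 : 0 <= B by rewrite /B sumr_ge0 // => x _; rewrite mulr_ge0.
lra.
Qed.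
End LP.

Local Open Scope classical_set_scope.
Local Open Scope ring_scope.

Lemma cvg_sum_seq (R : realType) (I : eqType) (F : I -> nat -> R) (l : I -> R) (r : seq I) :
  (forall i, F i k @[k --> \oo] --> l i) ->
  (\sum_(i <- r) F i k) @[k --> \oo] --> \sum_(i <- r) l i.
Proof.
move=> H; elim: r => [|i r IH].
  rewrite big_nil.
  have -> : (fun k => \sum_(i <- [::]) F i k) = (fun=> 0) by apply: funext => k; rewrite big_nil.
  exact: cvg_cst.
rewrite big_cons.
have -> : (fun k => \sum_(j <- i :: r) F j k) = (F i + (fun k => \sum_(j <- r) F j k)).
  by apply: funext => k; rewrite big_cons.
exact: cvgD.
Qed.

Lemma cvg_sumF (R : realType) (I : finType) (F : I -> nat -> R) (l : I -> R) :
  (forall i, F i k @[k --> \oo] --> l i) ->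
  (\sum_i F i k) @[k --> \oo] --> \sum_i l i.
Proof. exact: cvg_sum_seq. Qed.
Arguments cvg_sumF {R I F l}.

Lemma cvg_max0 (R : realType) (g : nat -> R) :
  g k @[k --> \oo] --> (1:R) -> Num.max 0 (g k) @[k --> \oo] --> (1:R).
Proof.
move=> Hg.
have Hd : `|g k - 1| @[k --> \oo] --> 0.
  have -> : (0:R) = `|(1:R) - 1| by rewrite subrr normr0.
  apply: cvg_norm; apply: cvgB => //; exact: cvg_cst.
apply: (@squeeze_cvgr _ _ _ _ (fun k => 1 - `|g k - 1|) (fun k => 1 + `|g k - 1|)).
- apply: nearW => k; apply/andP; split.
    rewrite le_max; apply/orP; right.
    by have := ler_norm (1 - g k); rewrite distrC => ?; lra.
  rewrite ge_max; apply/andP; split.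
    by have := normr_ge0 (g k - 1) => ?; lra.
  by have := ler_norm (g k - 1) => ?; lra.
- rewrite -[X in _ --> X]subr0; apply: cvgB => //; exact: cvg_cst.
- rewrite -[X in _ --> X]addr0; apply: cvgD => //; exact: cvg_cst.
Qed.

Theorem proposition3 (R : realType) (X : finType) (HX : (0 < #|X|)%N)
  (Phi : X -> X -> R) (Phi_sym : forall x y, Phi x y = Phi y x)
  (n : nat -> X -> nat) (f : X -> R)
  (HN : (fun k => ((\sum_x n k x)%N)%:R : R) @ \oo --> +oo)
  (Hf : forall x, (fun k => (n k x)%:R / ((\sum_y n k y)%N)%:R : R) @ \oo --> f x) :
  exists (m : nat -> X -> nat) (mu : nat -> X -> X -> nat) (u : nat -> X -> R),
    (forall k x, (m k x <= n k x)%N) /\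
    (forall k, stable_outcome (m k) Phi (mu k) (u k)) /\
    ((fun k => (((\sum_x n k x)%N)%:R - ((\sum_x m k x)%N)%:R)
                 / ((\sum_x n k x)%N)%:R : R) @ \oo --> 0) /\
    ((fun k => (\sum_x ((n k x - m k x)%N)%:R * u k x)
                 / ((\sum_x n k x)%N)%:R : R) @ \oo --> 0).
Proof.
pose NN k : R := ((\sum_x n k x)%N)%:R.
pose p k x : R := (n k x)%:R / NN k.
have NN0 k : 0 <= NN k by rewrite ler0n.
have p0 k x : 0 <= p k x by rewrite /p divr_ge0 ?ler0n.
have f0 x : 0 <= f x.
  have Hn : \forall k \near \oo, [set y : R | 0 <= y] (p k x) by apply: nearW => k; exact: p0.
  have H := (closed_cvg [set y : R | 0 <= y] (@closed_ge R 0) Hn (f x) (Hf x)).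
  exact: H.
have [u [lam [sig [u0 [uPhi [lam0 [sig0 [HF [CSl CSs]]]]]]]]] := @lp_main R X Phi f f0.
pose g k := 1 - \sum_y `|p k y - f y| / f y.
pose r k := Num.max 0 (g k).
pose s k := r k * NN k.
pose kap k x y := Num.Def.trunc (lam x y * s k).
pose tau k x := Num.Def.trunc (sig x * s k).
pose m k x := (\sum_y (kap k x y + kap k y x) + tau k x)%N.
pose mu k x y := if x == y then kap k x x else (kap k x y + kap k y x)%N.
exists m, mu, (fun _ => u).
have r0 k : 0 <= r k by rewrite le_max lexx.
have s0 k : 0 <= s k by rewrite mulr_ge0.
have trunc_le c k : 0 <= c -> (Num.Def.trunc (c * s k))%:R <= c * s k.
  by move=> c0; have /andP[] := truncn_itv (mulr_ge0 c0 (s0 k)).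
have trunc_gt c k : c * s k - 1 < (Num.Def.trunc (c * s k))%:R.
  by have := truncnS_gt (c * s k); rewrite -natr1 => ?; lra.
have Hmf k x : (m k x)%:R <= f x * s k.
  rewrite /m natrD natr_sum HF mulrDl mulr_suml.
  apply: lerD; last exact: trunc_le.
  apply: ler_sum => y _; rewrite natrD mulrDl; apply: lerD; exact: trunc_le.
have Hfr k x : f x * r k <= p k x.
  rewrite /r; case: (lerP 0 (g k)) => Hg; last first.
    by rewrite mulr0.

  case: (eqVneq (f x) 0) => [->|fx0]; first by rewrite mul0r.
  have E1 : f x * (`|p k x - f x| / f x) = `|p k x - f x|.
    by rewrite mulrCA mulfV ?mulr1.
  have E2 : f x * (`|p k x - f x| / f x) <= f x * \sum_y `|p k y - f y| / f y.
    rewrite ler_wpM2l // (bigD1 x) //= lerDl; apply: sumr_ge0 => y _.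
    by rewrite divr_ge0.
  have E3 : f x - p k x <= `|p k x - f x| by rewrite distrC ler_norm.
  rewrite /g mulrBr mulr1; lra.
have Hmn k x : (m k x <= n k x)%N.
  rewrite -(ler_nat R); apply: le_trans (Hmf k x) _.
  rewrite /s mulrA.
  apply: (@le_trans _ _ (p k x * NN k)); first by rewrite ler_wpM2r.
  rewrite /p; case: (eqVneq (NN k) 0) => [->|N0]; first by rewrite mulr0.
  by rewrite divfK.
split; first exact: Hmn.
split.
  move=> k; split; last by split.
  split.
    split.
      move=> x y; rewrite /mu; case: (eqVneq x y) => [->//|xy].
      by rewrite addnC.
    move=> x.
    have E : (\sum_(y | y != x) mu k x y = \sum_(y | y != x) (kap k x y + kap k y x))%N.
      by apply: eq_bigr => y yx; rewrite /mu eq_sym (negPf yx).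
    rewrite E /mu eqxx /m.
    rewrite [X in (_ <= X + _)%N](bigD1 x) //=.
    lia.
  pose K x y : R := (kap k x y)%:R.
  pose T x : R := (tau k x)%:R.
  have CK x y : K x y * (u x + u y - Phi x y) = 0.
    have := CSl x y; move/eqP; rewrite mulf_eq0 => /orP[/eqP l0|/eqP e0]; last by rewrite e0 mulr0.
    by rewrite /K /kap l0 mul0r truncn0 mul0r.
  have CT x : T x * u x = 0.
    have := CSs x; move/eqP; rewrite mulf_eq0 => /orP[/eqP l0|/eqP e0]; last by rewrite e0 mulr0.
    by rewrite /T /tau l0 mul0r truncn0 mul0r.
  have LHS : \sum_x (m k x)%:R * u x = \sum_x \sum_y K x y * Phi x y.
    transitivity (\sum_x \sum_y K x y * u x + \sum_x \sum_y K y x * u x + \sum_x T x * u x).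
      rewrite -!big_split; apply: eq_bigr => x _ /=.
      rewrite /m natrD natr_sum mulrDl mulr_suml -big_split /=; congr (_ + _).
      by apply: eq_bigr => y _; rewrite natrD mulrDl.
    rewrite [X in _ + X + _]exchange_big /=.
    have -> : \sum_x T x * u x = 0 by apply: big1 => x _; exact: CT.
    rewrite addr0 -big_split /=; apply: eq_bigr => x _.
    rewrite -big_split /=; apply: eq_bigr => y _.
    apply/eqP; rewrite -subr_eq0; apply/eqP; rewrite -(CK x y); ring.
  have RHS : surplusR Phi (mu k) = \sum_x \sum_y K x y * Phi x y.
    rewrite /surplusR.
    have Ho x : \sum_(y | y != x) (mu k x y)%:R * Phi x y / 2
        = \sum_y (K x y + K y x) * Phi x y / 2 - K x x * Phi x x.
      rewrite (eq_bigr (fun y => (K x y + K y x) * Phi x y / 2)); last first.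
        by move=> y yx; rewrite /mu eq_sym (negPf yx) natrD.
      rewrite [in RHS](bigD1 x) //=.
      set S' := \sum_(y | y != x) _.
      lra.
    rewrite (eq_bigr (fun x => K x x * Phi x x)); last by move=> x _; rewrite /mu eqxx.
    rewrite (eq_bigr _ (fun x _ => Ho x)) sumrB.
    have W1 : \sum_x \sum_y (K x y + K y x) * Phi x y / 2
        = (\sum_x \sum_y K x y * Phi x y + \sum_x \sum_y K y x * Phi x y) / 2.
      rewrite -big_split mulr_suml; apply: eq_bigr => x _.
      rewrite -big_split mulr_suml; apply: eq_bigr => y _ /=; ring.
    have W2 : \sum_x \sum_y K y x * Phi x y = \sum_x \sum_y K x y * Phi x y.
      by rewrite exchange_big; apply: eq_bigr => x _; apply: eq_bigr => y _; rewrite Phi_sym.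
    rewrite W1 W2; lra.
  by rewrite LHS RHS.
have Hz y : (fun k => `|p k y - f y| / f y) @ \oo --> (0:R).
  have H1 : (fun k => p k y - f y) @ \oo --> (0:R).
    by rewrite -(subrr (f y)); exact: (cvgB (Hf y) (cvg_cst (f y))).
  have H2 : (fun k => `|p k y - f y|) @ \oo --> `|0:R| by exact: cvg_norm H1.
  rewrite normr0 in H2.
  have H3 := cvgM H2 (cvg_cst (f y)^-1); rewrite mul0r in H3.
  exact: H3.
have Lg : g k @[k --> \oo] --> (1:R).
  have := cvg_sumF Hz; rewrite big1_eq => H.
  have := cvgB (cvg_cst (1:R)) H; rewrite subr0; exact.
have Lr : r k @[k --> \oo] --> (1:R) by exact: cvg_max0.
have LN : \forall k \near \oo, 0 < NN k by exact: (cvgry_gt HN 0).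
have Linv : (fun k => (NN k)^-1) @ \oo --> (0:R) by exact: (gtr0_cvgV0 LN).2 HN.
have Ltr c : 0 <= c -> (fun k => (Num.Def.trunc (c * s k))%:R / NN k) @ \oo --> c.
  move=> c0.
  have Hc : (fun k => c * r k) @ \oo --> c.
    by have := cvgM (cvg_cst c) Lr; rewrite mulr1; exact.
  have Hc' : (fun k => c * r k - (NN k)^-1) @ \oo --> c.
    by have := cvgB Hc Linv; rewrite subr0; exact.
  apply: (@squeeze_cvgr _ _ _ _ (fun k => c * r k - (NN k)^-1) (fun k => c * r k)) => //.
  apply: filterS LN => k Nk; apply/andP; split.
    have E : c * r k - (NN k)^-1 = (c * s k - 1) / NN k.
      by rewrite /s mulrBl mulrA mulfK ?mul1r // gt_eqF.
    rewrite E; apply: ler_wpM2r; first by rewrite invr_ge0 ltW.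
    exact: ltW (trunc_gt c k).
  have E : c * r k = (c * s k) / NN k by rewrite /s mulrA mulfK // gt_eqF.
  rewrite E; apply: ler_wpM2r; first by rewrite invr_ge0 ltW.
  exact: trunc_le.
have Lm x : (fun k => (m k x)%:R / NN k) @ \oo --> f x.
  have -> : (fun k => (m k x)%:R / NN k) = (fun k => \sum_y ((kap k x y)%:R / NN k
      + (kap k y x)%:R / NN k) + (tau k x)%:R / NN k).
    apply: funext => k; rewrite /m natrD natr_sum mulrDl mulr_suml; congr (_ + _).
    by apply: eq_bigr => y _; rewrite natrD mulrDl.
  rewrite [X in _ --> X]HF; apply: cvgD; last exact: Ltr.
  apply: cvg_sumF => y; apply: cvgD; exact: Ltr.
have Lq x : (fun k => p k x - (m k x)%:R / NN k) @ \oo --> (0:R).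
  by have := cvgB (Hf x) (Lm x); rewrite subrr; exact.
split.
  have -> : (fun k => (((\sum_x n k x)%N)%:R - ((\sum_x m k x)%N)%:R)
                 / ((\sum_x n k x)%N)%:R : R) = (fun k => \sum_x (p k x - (m k x)%:R / NN k)).
    apply: funext => k; rewrite [X in (X - _) / _]natr_sum natr_sum -sumrB mulr_suml.
    by apply: eq_bigr => x _; rewrite mulrBl.
  by have := cvg_sumF Lq; rewrite big1_eq; exact.
have -> : (fun k => (\sum_x ((n k x - m k x)%N)%:R * u x) / ((\sum_x n k x)%N)%:R : R)
   = (fun k => \sum_x (p k x - (m k x)%:R / NN k) * u x).
  apply: funext => k; rewrite mulr_suml; apply: eq_bigr => x _.
  by rewrite natrB ?Hmn // /p; ring.
have Hqu x : (fun k => (p k x - (m k x)%:R / NN k) * u x) @ \oo --> (0:R).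
  by have := cvgM (Lq x) (cvg_cst (u x)); rewrite mul0r; exact.
have := cvg_sumF Hqu; rewrite big1_eq; exact.
Qed.
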